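(* Let $r>2$ be an integer, $\delta=1/r$, and define $\ell_1=3$, $\ell_i=2\ell_{i-1}-\lceil\delta\ell_{i-1}\rceil$ for $2\le i\le r$. Let $\gamma_i=T_{\rm rel}(\ell_i)$ and $\epsilon_i=(1-q)^{\lceil\delta\ell_i\rceil}$. Then for all $2\le i\le r$, $$\gamma_i\le\frac{2}{1-\sqrt{\epsilon_{i-1}}}\,\gamma_{i-1}.$$
   Context: Fix $q\in(0,1/2)$, $p=1-q$. $T_{\rm rel}(L)$ is the relaxation time (inverse spectral gap) of the East process on $\{1,\dots,L\}$: the Markov chain on $\{0,1\}^{\{1,\dots,L\}}$ with generator $\mathcal L f(\sigma)=\sum_{x}c_x(\sigma)[\pi_x(f)-f](\sigma)$, $c_1\equiv1$, $c_x(\sigma)=1-\sigma_{x-1}$ ($x\ge2$), $\pi_x(f)$ the average over $\sigma_x\sim$ Bernoulli$(p)$; the gap is $\inf_f\sum_x\pi(c_x\mathrm{Var}_xf)/\mathrm{Var}_\pi(f)$ with $\pi$ the product Bernoulli$(p)$ measure. *)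

(* Defs.v *)
From Stdlib Require Import Reals Lra List Arith ClassicalEpsilon.
Import ListNotations.
Open Scope R_scope.

(* Configurations of the East process on {1,...,L}: a list of L booleans,
   site x (1 <= x <= L) is stored at list index x-1; true = occupied (1). *)
Definition config := list bool.

Fixpoint all_configs (L : nat) : list config :=
  match L with
  | O => [ [] ]
  | S n => flat_map (fun s => [true :: s; false :: s]) (all_configs n)
  end.

(* product Bernoulli(p) weight, p = 1 - q *)
Fixpoint weight (q : R) (s : config) : R :=
  match s with
  | [] => 1
  | b :: t => (if b then 1 - q else q) * weight q t
  end.

Definition mu (q : R) (L : nat) (f : config -> R) : R :=
  fold_right Rplus 0 (map (fun s => weight q s * f s) (all_configs L)).

Definition Var (q : R) (L : nat) (f : config -> R) : R :=
  mu q L (fun s => f s * f s) - mu q L f * mu q L f.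

Definition set_site (s : config) (x : nat) (b : bool) : config :=
  firstn (x - 1) s ++ b :: skipn x s.

Definition pi_x (q : R) (x : nat) (f : config -> R) (s : config) : R :=
  (1 - q) * f (set_site s x true) + q * f (set_site s x false).

Definition Var_x (q : R) (x : nat) (f : config -> R) (s : config) : R :=
  pi_x q x (fun t => f t * f t) s - pi_x q x f s * pi_x q x f s.

(* East constraint: c_1 = 1, c_x = 1 - sigma_{x-1} *)
Definition c_x (x : nat) (s : config) : R :=
  match x with
  | O | 1%nat => 1
  | S y => if nth (y - 1) s false then 0 else 1
  end.

Definition Dirichlet (q : R) (L : nat) (f : config -> R) : R :=
  fold_right Rplus 0
    (map (fun x => mu q L (fun s => c_x x s * Var_x q x f s)) (seq 1 L)).

Definition rayleigh_set (q : R) (L : nat) (r : R) : Prop :=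
  exists f : config -> R, Var q L f <> 0 /\ r = Dirichlet q L f / Var q L f.

Definition is_glb (E : R -> Prop) (g : R) : Prop :=
  (forall r, E r -> g <= r) /\ (forall b, (forall r, E r -> b <= r) -> b <= g).

Definition spectral_gap (q : R) (L : nat) : R :=
  epsilon (inhabits 0) (fun g => is_glb (rayleigh_set q L) g).

Definition Trel (q : R) (L : nat) : R := / spectral_gap q L.

Definition ceil_div (a r : nat) : nat := ((a + r - 1) / r)%nat.

(* ell r i = l_i : l_1 = 3, l_i = 2 l_{i-1} - ceil(l_{i-1}/r); (l_0 := 3 unused) *)
Fixpoint ell (r : nat) (i : nat) : nat :=
  match i with
  | O => 3%nat
  | S m => match m with
           | O => 3%nat
           | _ => (2 * ell r m - ceil_div (ell r m) r)%nat
           end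
  end.

Definition eps (q : R) (r i : nat) : R := (1 - q) ^ ceil_div (ell r i) r.

(* Main.v *)
Require Import Defs.
From Stdlib Require Import Reals.
From Stdlib Require Import Lra Lia List Arith FunctionalExtensionality ClassicalEpsilon.
Import ListNotations.
Open Scope R_scope.

Definition sumL {A} (xs : list A) (g : A -> R) : R := fold_right Rplus 0 (map g xs).

Lemma sumL_nil {A} (g : A -> R) : sumL [] g = 0. Proof. reflexivity. Qed.
Lemma sumL_cons {A} x xs (g : A -> R) : sumL (x :: xs) g = g x + sumL xs g.
Proof. reflexivity. Qed.
Lemma sumL_app {A} (xs ys : list A) g : sumL (xs ++ ys) g = sumL xs g + sumL ys g.
Proof. induction xs; simpl; [unfold sumL; simpl; lra|]. rewrite !sumL_cons, IHxs. lra. Qed.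
Lemma sumL_map {A B} (h : A -> B) xs g : sumL (map h xs) g = sumL xs (fun x => g (h x)).
Proof. unfold sumL. rewrite map_map. reflexivity. Qed.
Lemma sumL_ext {A} (xs : list A) g1 g2 : (forall x, In x xs -> g1 x = g2 x) -> sumL xs g1 = sumL xs g2.
Proof. intros H. induction xs; auto. rewrite !sumL_cons. rewrite H, IHxs; simpl; auto; intros; apply H; simpl; auto. Qed.
Lemma sumL_le {A} (xs : list A) g1 g2 : (forall x, In x xs -> g1 x <= g2 x) -> sumL xs g1 <= sumL xs g2.
Proof. intros H. induction xs. unfold sumL; simpl; lra. rewrite !sumL_cons.
  assert (g1 a <= g2 a) by (apply H; simpl; auto). assert (sumL xs g1 <= sumL xs g2) by (apply IHxs; intros; apply H; simpl; auto). lra. Qed.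
Lemma sumL_nonneg {A} (xs : list A) g : (forall x, In x xs -> 0 <= g x) -> 0 <= sumL xs g.
Proof. intros H. replace 0 with (sumL xs (fun _ => 0)). apply sumL_le; auto.
  induction xs; auto. rewrite sumL_cons, IHxs. lra. intros; apply H; simpl; auto. Qed.
Lemma sumL_flat_map {A B} (h : A -> list B) xs g : sumL (flat_map h xs) g = sumL xs (fun x => sumL (h x) g).
Proof. induction xs; auto. simpl. rewrite sumL_app, sumL_cons, IHxs. reflexivity. Qed.

Lemma mu_0 q f : mu q 0 f = f []. Proof. unfold mu. simpl. lra. Qed.
Lemma mu_S q l f : mu q (S l) f = (1 - q) * mu q l (fun s => f (true :: s)) + q * mu q l (fun s => f (false :: s)).
Proof.
  unfold mu. fold (sumL (all_configs (S l)) (fun s => weight q s * f s)).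
  fold (sumL (all_configs l) (fun s => weight q s * f (true :: s))).
  fold (sumL (all_configs l) (fun s => weight q s * f (false :: s))).
  simpl. rewrite sumL_flat_map.
  induction (all_configs l). unfold sumL; simpl; lra.
  rewrite !sumL_cons, IHl0. simpl. unfold sumL; simpl. lra.
Qed.

Lemma mu_plus q l f g : mu q l (fun s => f s + g s) = mu q l f + mu q l g.
Proof. revert f g; induction l; intros; rewrite ?mu_0, ?mu_S; auto. rewrite !IHl. lra. Qed.
Lemma mu_scal q l c f : mu q l (fun s => c * f s) = c * mu q l f.
Proof. revert f; induction l; intros; rewrite ?mu_0, ?mu_S; auto. rewrite !IHl. lra. Qed.
Lemma mu_const q l c : mu q l (fun _ => c) = c.
Proof. induction l; rewrite ?mu_0, ?mu_S; auto. rewrite IHl. lra. Qed.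
Lemma mu_ext q l f g : (forall s, length s = l -> f s = g s) -> mu q l f = mu q l g.
Proof. revert f g; induction l; intros f g H; rewrite ?mu_0, ?mu_S. apply H; auto.
  f_equal; f_equal; apply IHl; intros; apply H; simpl; auto. Qed.
Lemma mu_le q l f g : 0 <= q <= 1 -> (forall s, length s = l -> f s <= g s) -> mu q l f <= mu q l g.
Proof. intros Hq. revert f g; induction l; intros f g H; rewrite ?mu_0, ?mu_S. apply H; auto.
  assert (mu q l (fun s => f (true :: s)) <= mu q l (fun s => g (true :: s))) by (apply IHl; intros; apply H; simpl; auto).
  assert (mu q l (fun s => f (false :: s)) <= mu q l (fun s => g (false :: s))) by (apply IHl; intros; apply H; simpl; auto).
  nra. Qed.
Lemma mu_nonneg q l f : 0 <= q <= 1 -> (forall s, length s = l -> 0 <= f s) -> 0 <= mu q l f.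
Proof. intros. rewrite <- (mu_const q l 0). apply mu_le; auto. Qed.
Lemma mu_minus q l f g : mu q l (fun s => f s - g s) = mu q l f - mu q l g.
Proof. replace (fun s => f s - g s) with (fun s => f s + (-1) * g s) by (extensionality s; ring).
  rewrite mu_plus, mu_scal. ring. Qed.
Lemma mu_app q j l F : mu q (j + l) F = mu q j (fun a => mu q l (fun b => F (a ++ b))).
Proof. revert F; induction j; intros; simpl. rewrite mu_0; auto.
  rewrite !mu_S, !IHj. reflexivity. Qed.
Lemma mu_swap q j l G : mu q j (fun a => mu q l (fun b => G a b)) = mu q l (fun b => mu q j (fun a => G a b)).
Proof. revert G; induction j; intros. rewrite mu_0. f_equal. extensionality b. rewrite mu_0; auto.
  rewrite mu_S, !IHj. rewrite <- !mu_scal, <- mu_plus. f_equal. extensionality b. rewrite mu_S. reflexivity. Qed.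
Lemma mu_drop q j l F : mu q (j + l) (fun s => F (skipn j s)) = mu q l F.
Proof. rewrite mu_app. rewrite <- (mu_const q j (mu q l F)). apply mu_ext. intros a Ha.
  f_equal. extensionality b. rewrite skipn_app. subst. rewrite Nat.sub_diag, skipn_all. reflexivity. Qed.
Lemma mu_sumL {A} q l (xs : list A) G : mu q l (fun s => sumL xs (fun x => G s x)) = sumL xs (fun x => mu q l (fun s => G s x)).
Proof. induction xs. unfold sumL; simpl. apply mu_const.
  rewrite sumL_cons. rewrite <- IHxs, <- mu_plus. reflexivity. Qed.
Lemma sumL_plus {A} (xs : list A) g h : sumL xs (fun x => g x + h x) = sumL xs g + sumL xs h.
Proof. induction xs. unfold sumL; simpl; lra. rewrite !sumL_cons, IHxs. ring. Qed.
Lemma sumL_scal {A} (xs : list A) c g : sumL xs (fun x => c * g x) = c * sumL xs g.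
Proof. induction xs. unfold sumL; simpl; lra. rewrite !sumL_cons, IHxs. ring. Qed.
Lemma mu_scal_r q l c f : mu q l (fun s => f s * c) = mu q l f * c.
Proof. rewrite <- (Rmult_comm c), <- mu_scal. f_equal. extensionality s. ring. Qed.

Lemma set_site_app_l (a b : config) x c : (1 <= x <= length a)%nat ->
  set_site (a ++ b) x c = set_site a x c ++ b.
Proof. intros H. unfold set_site. rewrite firstn_app, skipn_app.
  replace (x - 1 - length a)%nat with 0%nat by lia. replace (x - length a)%nat with 0%nat by lia.
  simpl. rewrite app_nil_r, <- app_assoc. reflexivity. Qed.

Lemma set_site_app_r (a b : config) x c : (1 <= x)%nat ->
  set_site (a ++ b) (length a + x) c = a ++ set_site b x c.
Proof. intros H. unfold set_site. rewrite firstn_app, skipn_app.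
  replace (length a + x - 1 - length a)%nat with (x - 1)%nat by lia.
  replace (length a + x - length a)%nat with x by lia.
  rewrite firstn_all2 by lia. rewrite skipn_all2 by lia. simpl. rewrite <- app_assoc. reflexivity. Qed.

Lemma set_site_length (a : config) x c : (1 <= x <= length a)%nat -> length (set_site a x c) = length a.
Proof. intros H. unfold set_site. rewrite length_app. simpl. rewrite length_firstn, length_skipn. lia. Qed.

Lemma pi_app_l q (a b : config) x F : (1 <= x <= length a)%nat ->
  pi_x q x F (a ++ b) = pi_x q x (fun a' => F (a' ++ b)) a.
Proof. intros H. unfold pi_x. rewrite !set_site_app_l by auto. reflexivity. Qed.
Lemma Var_app_l q (a b : config) x F : (1 <= x <= length a)%nat ->
  Var_x q x F (a ++ b) = Var_x q x (fun a' => F (a' ++ b)) a.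
Proof. intros H. unfold Var_x. rewrite !pi_app_l by auto. reflexivity. Qed.
Lemma pi_app_r q (a b : config) x F : (1 <= x)%nat ->
  pi_x q (length a + x) F (a ++ b) = pi_x q x (fun b' => F (a ++ b')) b.
Proof. intros H. unfold pi_x. rewrite !set_site_app_r by auto. reflexivity. Qed.
Lemma Var_app_r q (a b : config) x F : (1 <= x)%nat ->
  Var_x q (length a + x) F (a ++ b) = Var_x q x (fun b' => F (a ++ b')) b.
Proof. intros H. unfold Var_x. rewrite !pi_app_r by auto. reflexivity. Qed.

Lemma c_app_l (a b : config) x : (x <= length a)%nat -> c_x x (a ++ b) = c_x x a.
Proof. intros H. destruct x as [|[|y]]; simpl; auto. rewrite app_nth1 by lia. reflexivity. Qed.

Lemma c_shift_false (b : config) x : (1 <= x)%nat -> c_x (S x) (false :: b) = c_x x b.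
Proof. intros H. destruct x as [|[|y]]; simpl; try lia; auto.
  replace (y - 0)%nat with y by lia. reflexivity. Qed.

Lemma c_app_r (a b : config) x : (1 <= x)%nat ->
  c_x (length a + x) (a ++ b) = c_x (S x) (nth (length a - 1) a false :: b).
Proof. intros H. destruct a as [|a0 a'].
  - change (c_x x b = c_x (S x) (false :: b)). rewrite c_shift_false; auto.
  - remember (a0 :: a') as a. assert (length a >= 1)%nat by (subst; simpl; lia).
    destruct x as [|[|y]]; try lia.
    + replace (length a + 1)%nat with (S (S (length a - 1))) by lia. simpl.
      rewrite app_nth1 by lia. replace (length a - 1 - 0)%nat with (length a - 1)%nat by lia. reflexivity.
    + replace (length a + S (S y))%nat with (S (S (length a + y))) by lia. simpl.
      rewrite app_nth2 by lia. replace (length a + y - 0 - length a)%nat with y by lia.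
      replace (y - 0)%nat with y by lia. reflexivity.
Qed.

Lemma c_bounds x s : 0 <= c_x x s <= 1.
Proof. destruct x as [|[|y]]; simpl; try lra. destruct (nth (y - 0) s false); lra. Qed.

Lemma c_shift_le x b s : (1 <= x)%nat -> c_x (S x) (b :: s) <= c_x (S x) (false :: s).
Proof. intros H. rewrite c_shift_false by auto. destruct x as [|[|y]]; try lia.
  - simpl. destruct b; lra.
  - simpl. replace (y - 0)%nat with y by lia. lra. Qed.

Lemma Var_x_nonneg q x f s : 0 <= q <= 1 -> 0 <= Var_x q x f s.
Proof. intros Hq. unfold Var_x, pi_x.
  set (u := f (set_site s x true)). set (v := f (set_site s x false)).
  replace ((1 - q) * (u * u) + q * (v * v) - ((1 - q) * u + q * v) * ((1 - q) * u + q * v))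
    with ((1 - q) * q * ((u - v) * (u - v))) by ring.
  apply Rmult_le_pos; [apply Rmult_le_pos; lra|apply Rle_0_sqr]. Qed.

Lemma Var_x_const_shift q x f c s : Var_x q x (fun t => f t - c) s = Var_x q x f s.
Proof. unfold Var_x, pi_x. ring. Qed.

(* Dirichlet form with boundary bit b *)
Definition Db q (b : bool) l (phi : config -> R) : R :=
  sumL (seq 1 l) (fun x => mu q l (fun s => c_x (S x) (b :: s) * Var_x q x phi s)).

Lemma Dirichlet_sumL q l f : Dirichlet q l f = sumL (seq 1 l) (fun x => mu q l (fun s => c_x x s * Var_x q x f s)).
Proof. reflexivity. Qed.

Lemma Db_false q l phi : Db q false l phi = Dirichlet q l phi.
Proof. unfold Db. rewrite Dirichlet_sumL. apply sumL_ext. intros x Hx. apply in_seq in Hx.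
  f_equal. extensionality s. rewrite c_shift_false by lia. reflexivity. Qed.

Lemma Db_le q b l phi : 0 <= q <= 1 -> Db q b l phi <= Db q false l phi.
Proof. intros Hq. unfold Db. apply sumL_le. intros x Hx. apply in_seq in Hx. apply mu_le; auto.
  intros s _. apply Rmult_le_compat_r. apply Var_x_nonneg; auto. apply c_shift_le; lia. Qed.

Lemma Db_nonneg q b l phi : 0 <= q <= 1 -> 0 <= Db q b l phi.
Proof. intros Hq. unfold Db. apply sumL_nonneg. intros x _. apply mu_nonneg; auto. intros s _.
  apply Rmult_le_pos. apply c_bounds. apply Var_x_nonneg; auto. Qed.

Lemma D_nonneg q l f : 0 <= q <= 1 -> 0 <= Dirichlet q l f.
Proof. intros. rewrite <- Db_false. apply Db_nonneg; auto. Qed.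

Lemma seq_shift_add j s l : seq (j + s) l = map (fun x => (j + x)%nat) (seq s l).
Proof. revert s; induction l; intros; simpl; auto. f_equal. rewrite <- IHl. f_equal. lia. Qed.

Lemma D_decomp q j l g :
  Dirichlet q (j + l) g =
  sumL (seq 1 j) (fun x => mu q j (fun a => mu q l (fun y => c_x x a * Var_x q x (fun a' => g (a' ++ y)) a)))
  + mu q j (fun a => Db q (nth (j - 1) a false) l (fun y => g (a ++ y))).
Proof.
  rewrite Dirichlet_sumL. rewrite seq_app. rewrite sumL_app. f_equal.
  - apply sumL_ext. intros x Hx. apply in_seq in Hx. rewrite mu_app. apply mu_ext. intros a Ha.
    f_equal. extensionality y. rewrite c_app_l by lia. rewrite Var_app_l by lia. reflexivity.
  - replace (1 + j)%nat with (j + 1)%nat by lia. rewrite seq_shift_add, sumL_map.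
    unfold Db.
    transitivity (sumL (seq 1 l) (fun x => mu q j (fun a => mu q l (fun s => c_x (S x) (nth (j - 1) a false :: s) * Var_x q x (fun y => g (a ++ y)) s)))).
    + apply sumL_ext. intros x Hx. apply in_seq in Hx. rewrite mu_app. apply mu_ext. intros a Ha.
      f_equal. extensionality y. rewrite <- Ha. rewrite c_app_r by lia. rewrite Var_app_r by lia. reflexivity.
    + rewrite mu_sumL. reflexivity.
Qed.

Lemma Db_true_S q l phi :
  Db q true (S l) phi = (1 - q) * Db q true l (fun t => phi (true :: t)) + q * Dirichlet q l (fun t => phi (false :: t)).
Proof.
  unfold Db at 1. simpl seq. rewrite sumL_cons.
  replace (mu q (S l) (fun s => c_x 2 (true :: s) * Var_x q 1 phi s)) with 0.
  2:{ rewrite <- (mu_const q (S l) 0). f_equal. extensionality s. simpl. ring. }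
  rewrite <- seq_shift, sumL_map. rewrite <- Db_false. unfold Db.
  transitivity (sumL (seq 1 l) (fun x => (1 - q) * mu q l (fun s => c_x (S x) (true :: s) * Var_x q x (fun t => phi (true :: t)) s)
      + q * mu q l (fun s => c_x (S x) (false :: s) * Var_x q x (fun t => phi (false :: t)) s))).
  - rewrite Rplus_0_l. apply sumL_ext. intros x Hx. apply in_seq in Hx. rewrite mu_S. f_equal; f_equal; f_equal; extensionality s.
    + f_equal. 
      * destruct x as [|y]; try lia. simpl. rewrite ?Nat.sub_0_r. reflexivity.
      * replace (S x) with (length [true] + x)%nat by reflexivity. exact (Var_app_r q [true] s x phi ltac:(lia)).
    + f_equal.
      * destruct x as [|y]; try lia. simpl. rewrite ?Nat.sub_0_r. reflexivity.
      * replace (S x) with (length [false] + x)%nat by reflexivity. exact (Var_app_r q [false] s x phi ltac:(lia)).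
  - rewrite sumL_plus, !sumL_scal. reflexivity.
Qed.

Lemma Var_center q l f : Var q l f = mu q l (fun s => (f s - mu q l f) * (f s - mu q l f)).
Proof. unfold Var. set (M := mu q l f).
  replace (fun s => (f s - M) * (f s - M)) with (fun s => (f s * f s + (-2 * M) * f s) + M * M) by (extensionality s; ring).
  rewrite mu_plus, mu_plus, mu_scal, mu_const. fold M. ring. Qed.

Lemma Var_nonneg q l f : 0 <= q <= 1 -> 0 <= Var q l f.
Proof. intros. rewrite Var_center. apply mu_nonneg; auto. intros; apply Rle_0_sqr. Qed.

Lemma Var_0 q h : Var q 0 h = 0. Proof. unfold Var. rewrite !mu_0. ring. Qed.
Lemma D_0 q h : Dirichlet q 0 h = 0. Proof. reflexivity. Qed.

Lemma ray_nonneg q l r : 0 <= q <= 1 -> rayleigh_set q l r -> 0 <= r.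
Proof. intros Hq [f [Hv ->]]. assert (0 <= Var q l f) by (apply Var_nonneg; auto).
  assert (0 < Var q l f) by lra. apply Rmult_le_pos. apply D_nonneg; auto. left; apply Rinv_0_lt_compat; auto. Qed.

Lemma ray_nonempty q l : 0 < q < 1 -> (1 <= l)%nat -> exists r, rayleigh_set q l r.
Proof. intros Hq Hl. destruct l as [|l]; try lia.
  set (f := fun s : config => match s with true :: _ => 1 | _ => 0 end).
  exists (Dirichlet q (S l) f / Var q (S l) f). exists f. split; auto.
  unfold Var. rewrite !mu_S. simpl. rewrite !mu_const. nra. Qed.

Lemma glb_exists q l : 0 < q < 1 -> (1 <= l)%nat -> exists g, is_glb (rayleigh_set q l) g.
Proof. intros Hq Hl.
  destruct (completeness (fun x => rayleigh_set q l (- x))) as [m [Hub Hlub]].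
  - exists 0. intros x Hx. apply ray_nonneg in Hx; lra.
  - destruct (ray_nonempty q l Hq Hl) as [r Hr]. exists (- r). rewrite Ropp_involutive; auto.
  - exists (- m). split.
    + intros r Hr. assert (- r <= m) by (apply Hub; rewrite Ropp_involutive; auto). lra.
    + intros b Hb. assert (m <= - b). { apply Hlub. intros x Hx. apply Hb in Hx. lra. } lra.
Qed.

Lemma gap_glb q l : 0 < q < 1 -> (1 <= l)%nat -> is_glb (rayleigh_set q l) (spectral_gap q l).
Proof. intros. unfold spectral_gap. apply epsilon_spec. apply glb_exists; auto. Qed.

Lemma gap_nonneg q l : 0 < q < 1 -> (1 <= l)%nat -> 0 <= spectral_gap q l.
Proof. intros. destruct (gap_glb q l) as [_ H2]; auto. apply H2. intros; eapply ray_nonneg; eauto; lra. Qed.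

Lemma gapVar q l h : 0 < q < 1 -> (1 <= l)%nat -> spectral_gap q l * Var q l h <= Dirichlet q l h.
Proof. intros Hq Hl. assert (0 <= Var q l h) by (apply Var_nonneg; lra).
  destruct (Req_dec (Var q l h) 0) as [E|E].
  - rewrite E, Rmult_0_r. apply D_nonneg; lra.
  - destruct (gap_glb q l Hq Hl) as [H1 _].
    assert (spectral_gap q l <= Dirichlet q l h / Var q l h) by (apply H1; exists h; auto).
    assert (0 < Var q l h) by lra.
    apply (Rmult_le_compat_r (Var q l h)) in H0; [|lra]. unfold Rdiv in H0.
    rewrite Rmult_assoc, Rinv_l, Rmult_1_r in H0; auto.
Qed.

Lemma gap_ge q l c : 0 < q < 1 -> (1 <= l)%nat -> (forall h, c * Var q l h <= Dirichlet q l h) -> c <= spectral_gap q l.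
Proof. intros Hq Hl H. destruct (gap_glb q l Hq Hl) as [_ H2]. apply H2.
  intros r [h [Hv ->]]. assert (0 <= Var q l h) by (apply Var_nonneg; lra).
  assert (0 < Var q l h) by lra. specialize (H h).
  apply (Rmult_le_reg_r (Var q l h)); auto. unfold Rdiv. rewrite Rmult_assoc, Rinv_l, Rmult_1_r; lra. Qed.

Lemma gap_mono q j l : 0 < q < 1 -> (1 <= l)%nat -> spectral_gap q (j + l) <= spectral_gap q l.
Proof. intros Hq Hl. apply gap_ge; auto. intros h.
  set (g := fun s : config => h (skipn j s)).
  assert (HV : Var q (j + l) g = Var q l h).
  { unfold Var, g. rewrite !(mu_drop q j l (fun t => h t * h t)), mu_drop. reflexivity. }
  assert (HD : Dirichlet q (j + l) g <= Dirichlet q l h).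
  { rewrite D_decomp.
    replace (sumL (seq 1 j) _) with 0.
    2:{ rewrite <- (sumL_ext (seq 1 j) (fun _ => 0)). unfold sumL; induction (seq 1 j); simpl; auto; lra.
        intros x Hx. apply in_seq in Hx. rewrite <- (mu_const q j 0). apply mu_ext. intros a Ha.
        rewrite <- (mu_const q l 0). apply mu_ext. intros y Hy.
        assert (Hs : forall b, skipn j (set_site a x b ++ y) = y).
        { intros b. rewrite skipn_app, set_site_length by lia. rewrite Ha, Nat.sub_diag, skipn_all2; auto.
          rewrite set_site_length; lia. }
        unfold Var_x, pi_x, g. rewrite !Hs. ring. }
    rewrite Rplus_0_l. rewrite <- (mu_const q j (Dirichlet q l h)). apply mu_le; [lra|]. intros a Ha.
    assert (E : (fun y : config => g (a ++ y)) = h).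
    { extensionality y. unfold g. rewrite skipn_app, skipn_all2 by lia. rewrite Ha, Nat.sub_diag. reflexivity. }
    rewrite E. rewrite <- Db_false. apply Db_le; lra. }
  rewrite <- HV. assert (1 <= j + l)%nat by lia. pose proof (gapVar q (j + l) g Hq H). lra.
Qed.

Fixpoint Qop (q : R) (m k : nat) (phi : config -> R) {struct k} : config -> R :=
  match k with
  | O => phi
  | S k' => fun s => match s with
     | true :: t => Qop q m k' (fun t' => phi (true :: t')) t
     | false :: t => mu q (k' + m) (fun t' => phi (false :: t'))
     | [] => 0 end
  end.

Lemma Qa q m k phi : mu q (k + m) (fun y => Qop q m k phi y * Qop q m k phi y) = mu q (k + m) (fun y => phi y * Qop q m k phi y).
Proof. revert phi; induction k; intros; simpl; auto.
  rewrite !mu_S. simpl. rewrite IHk. f_equal. f_equal.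
  rewrite mu_const. set (c := mu q (k + m) (fun t' => phi (false :: t'))).
  rewrite mu_scal_r. reflexivity. Qed.

Lemma Qb q m k L phi : 0 < q < 1 -> 0 <= spectral_gap q L ->
  (forall l h, (l < L)%nat -> spectral_gap q L * Var q l h <= Dirichlet q l h) ->
  (k + m <= L)%nat ->
  spectral_gap q L * (mu q (k + m) (fun y => phi y * phi y) - mu q (k + m) (fun y => Qop q m k phi y * Qop q m k phi y))
    <= Db q true (k + m) phi.
Proof. intros Hq G0 H. revert phi; induction k; intros phi Hk; simpl.
  - rewrite Rminus_diag, Rmult_0_r. apply Db_nonneg; lra.
  - rewrite Db_true_S, !mu_S. simpl. rewrite mu_const.
    pose proof (IHk (fun t => phi (true :: t)) ltac:(lia)).
    pose proof (H (k + m)%nat (fun t => phi (false :: t)) ltac:(lia)).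
    unfold Var in H1.
    set (A := mu q (k + m) (fun s => phi (true :: s) * phi (true :: s))) in *.
    set (B := mu q (k + m) (fun s => Qop q m k (fun t' => phi (true :: t')) s * Qop q m k (fun t' => phi (true :: t')) s)) in *.
    set (C := mu q (k + m) (fun s => phi (false :: s) * phi (false :: s))) in *.
    set (c := mu q (k + m) (fun t' => phi (false :: t'))) in *.
    nra.
Qed.

Lemma Qc q m k phi U lam : 0 < q < 1 -> 0 < lam -> mu q m U = 0 ->
  2 * mu q (k + m) (fun y => U (skipn k y) * Qop q m k phi y)
  <= lam * (1 - q) ^ k * mu q m (fun z => U z * U z) + / lam * mu q (k + m) (fun y => Qop q m k phi y * Qop q m k phi y).
Proof. intros Hq Hl HU. revert phi; induction k; intros phi; simpl.
  - rewrite Rmult_1_r. rewrite <- !mu_scal, <- mu_plus. apply mu_le; [lra|]. intros s _.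
    assert (0 <= (lam * U s - phi s) * (lam * U s - phi s)) by apply Rle_0_sqr.
    apply (Rmult_le_reg_l lam); auto. rewrite Rmult_plus_distr_l, <- (Rmult_assoc lam (/ lam)), Rinv_r by lra. nra.
  - rewrite !mu_S. simpl.
    set (c := mu q (k + m) (fun t' => phi (false :: t'))).
    rewrite mu_scal_r, (mu_drop q k m U), HU, mu_const.
    pose proof (IHk (fun t => phi (true :: t))).
    set (X := mu q (k + m) (fun s => U (skipn k s) * Qop q m k (fun t' => phi (true :: t')) s)) in *.
    set (B := mu q (k + m) (fun s => Qop q m k (fun t' => phi (true :: t')) s * Qop q m k (fun t' => phi (true :: t')) s)) in *.
    set (W := mu q m (fun z => U z * U z)) in *.
    assert (0 <= / lam * (q * (c * c))). { apply Rmult_le_pos. left; apply Rinv_0_lt_compat; auto. apply Rmult_le_pos; [lra|apply Rle_0_sqr]. }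
    assert (0 < 1 - q) by lra.
    apply (Rmult_le_compat_l (1 - q)) in H; [|lra].
    nra.
Qed.

Lemma Db_true_le q b l phi : 0 <= q <= 1 -> Db q true l phi <= Db q b l phi.
Proof. intros Hq. unfold Db. apply sumL_le. intros x Hx. apply in_seq in Hx. apply mu_le; auto.
  intros s _. apply Rmult_le_compat_r. apply Var_x_nonneg; auto.
  destruct x as [|[|y]]; try lia; simpl. destruct b; lra. lra. Qed.

Lemma firstn_app_len (a y : config) m : length a = m -> firstn m (a ++ y) = a.
Proof. intros <-. rewrite firstn_app, firstn_all, Nat.sub_diag. simpl. apply app_nil_r. Qed.
Lemma skipn_app_len (a y : config) m k : length a = m -> skipn (m + k) (a ++ y) = skipn k y.
Proof. intros <-. rewrite skipn_app, skipn_all2 by lia. simpl. f_equal. lia. Qed.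

Lemma D_shift q l f c : Dirichlet q l (fun t => f t - c) = Dirichlet q l f.
Proof. rewrite !Dirichlet_sumL. apply sumL_ext. intros x _. f_equal. extensionality s.
  rewrite Var_x_const_shift. reflexivity. Qed.

Lemma main_ineq q m k f : 0 < q < 1 -> (1 <= k)%nat ->
  spectral_gap q (k + m) * (1 - sqrt ((1 - q) ^ k)) * Var q (m + (k + m)) f
  <= 2 * Dirichlet q (m + (k + m)) f.
Proof.
  intros Hq Hk.
  set (L := (k + m)%nat). set (n := (m + L)%nat).
  assert (HL : (1 <= L)%nat) by (unfold L; lia).
  assert (G0 : 0 <= spectral_gap q L) by (apply gap_nonneg; auto).
  assert (Hsmall : forall l h, (l < L)%nat -> spectral_gap q L * Var q l h <= Dirichlet q l h).
  { intros l h Hl. destruct l as [|l].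
    - rewrite Var_0, D_0. lra.
    - replace L with ((L - S l) + S l)%nat by lia.
      assert (spectral_gap q (L - S l + S l) <= spectral_gap q (S l)) by (apply gap_mono; auto; lia).
      assert (0 <= Var q (S l) h) by (apply Var_nonneg; lra).
      pose proof (gapVar q (S l) h Hq ltac:(lia)). nra. }
  assert (Hq' : 0 <= q <= 1) by lra.
  set (M := mu q n f).
  set (g := fun s => f s - M).
  assert (HN : Var q n f = mu q n (fun s => g s * g s)) by (rewrite Var_center; reflexivity).
  assert (HD : Dirichlet q n f = Dirichlet q n g) by (unfold g; rewrite D_shift; reflexivity).
  assert (Hg0 : mu q n g = 0) by (unfold g; rewrite mu_minus, mu_const; unfold M; ring).
  assert (muLm : forall F, mu q n F = mu q m (fun z => mu q L (fun w => F (w ++ z)))).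
  { intros F. unfold n. replace (m + L)%nat with (L + m)%nat by lia. rewrite mu_app, mu_swap. reflexivity. }
  set (U := fun z => mu q L (fun w => g (w ++ z))).
  set (u := fun s : config => U (skipn L s)).
  assert (HU0 : mu q m U = 0) by (rewrite <- Hg0, muLm; reflexivity).
  set (A1 := mu q m (fun z => U z * U z)).
  assert (Hgu : mu q n (fun s => g s * u s) = A1).
  { rewrite muLm. unfold A1. apply mu_ext. intros z Hz. unfold u.
    transitivity (mu q L (fun w => g (w ++ z) * U z)).
    - apply mu_ext. intros w Hw. rewrite skipn_app, skipn_all2 by lia. rewrite Hw, Nat.sub_diag. reflexivity.
    - rewrite mu_scal_r. reflexivity. }
  assert (Huu : mu q n (fun s => u s * u s) = A1).
  { unfold n, u, A1. replace (m + L)%nat with (L + m)%nat by lia. apply (mu_drop q L m (fun z => U z * U z)). }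
  assert (H1 : spectral_gap q L * (mu q n (fun s => g s * g s) - A1) <= Dirichlet q n g).
  { transitivity (mu q m (fun z => Dirichlet q L (fun w => g (w ++ z)))).
    - rewrite muLm. unfold A1. rewrite <- mu_minus, <- mu_scal. apply mu_le; auto. intros z _.
      pose proof (gapVar q L (fun w => g (w ++ z)) Hq HL). unfold Var in H. unfold U. lra.
    - unfold n. replace (m + L)%nat with (L + m)%nat by lia. rewrite D_decomp.
      assert (0 <= mu q L (fun a => Db q (nth (L - 1) a false) m (fun y => g (a ++ y)))).
      { apply mu_nonneg; auto. intros; apply Db_nonneg; auto. }
      enough (mu q m (fun z => Dirichlet q L (fun w => g (w ++ z))) =
        sumL (seq 1 L) (fun x => mu q L (fun a => mu q m (fun y => c_x x a * Var_x q x (fun a' => g (a' ++ y)) a)))) by lra.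
      transitivity (mu q m (fun z => sumL (seq 1 L) (fun x => mu q L (fun a => c_x x a * Var_x q x (fun a' => g (a' ++ z)) a)))).
      { f_equal. }
      rewrite mu_sumL. apply sumL_ext. intros x _. rewrite mu_swap. reflexivity. }
  set (w := fun s : config => Qop q m k (fun y => g (firstn m s ++ y)) (skipn m s)).
  assert (Hw : forall a y, length a = m -> w (a ++ y) = Qop q m k (fun y' => g (a ++ y')) y).
  { intros a y Ha. unfold w. rewrite firstn_app_len by auto. replace m with (m + 0)%nat at 2 by lia.
    rewrite skipn_app_len by auto. reflexivity. }
  set (A2 := mu q m (fun a => mu q L (fun y => Qop q m k (fun y' => g (a ++ y')) y * Qop q m k (fun y' => g (a ++ y')) y))).
  assert (Hww : mu q n (fun s => w s * w s) = A2).
  { unfold n. rewrite mu_app. apply mu_ext. intros a Ha. apply mu_ext. intros y _. rewrite Hw; auto. }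
  assert (Hgw : mu q n (fun s => g s * w s) = A2).
  { unfold n. rewrite mu_app. apply mu_ext. intros a Ha. unfold L. rewrite Qa.
    apply mu_ext. intros y _. rewrite Hw; auto. }
  assert (H2 : spectral_gap q L * (mu q n (fun s => g s * g s) - A2) <= Dirichlet q n g).
  { unfold n at 1. rewrite mu_app. unfold A2. rewrite <- mu_minus, <- mu_scal.
    transitivity (mu q m (fun a => Db q (nth (m - 1) a false) L (fun y => g (a ++ y)))).
    - apply mu_le; auto. intros a _. eapply Rle_trans; [|apply Db_true_le; auto].
      apply Qb; auto.
    - unfold n. rewrite D_decomp.
      assert (0 <= sumL (seq 1 m) (fun x => mu q m (fun a => mu q L (fun y => c_x x a * Var_x q x (fun a' => g (a' ++ y)) a)))).
      { apply sumL_nonneg. intros. apply mu_nonneg; auto. intros. apply mu_nonneg; auto. intros.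
        apply Rmult_le_pos. apply c_bounds. apply Var_x_nonneg; auto. }
      lra. }
  set (s := sqrt ((1 - q) ^ k)).
  assert (Hpk : 0 < (1 - q) ^ k) by (apply pow_lt; lra).
  assert (Hs0 : 0 < s) by (apply sqrt_lt_R0; auto).
  assert (Hss : s * s = (1 - q) ^ k) by (apply sqrt_sqrt; lra).
  assert (Hpk1 : (1 - q) ^ k < 1) by (apply pow_lt_1_compat; lra || lia).
  assert (Hs1 : s < 1) by nra.
  set (X := mu q n (fun s0 => u s0 * w s0)).
  assert (HX : 2 * X <= s * A1 + s * A2).
  { assert (EX : X = mu q m (fun a => mu q L (fun y => U (skipn k y) * Qop q m k (fun y' => g (a ++ y')) y))).
    { unfold X, n. rewrite mu_app. apply mu_ext. intros a Ha. apply mu_ext. intros y _. rewrite Hw by auto. unfold u, L.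
      replace (k + m)%nat with (m + k)%nat by lia. rewrite skipn_app_len by auto. reflexivity. }
    rewrite EX. rewrite <- mu_scal.
    transitivity (mu q m (fun a => / s * (1 - q) ^ k * A1 + / / s * mu q L (fun y => Qop q m k (fun y' => g (a ++ y')) y * Qop q m k (fun y' => g (a ++ y')) y))).
    - apply mu_le; auto. intros a _. apply Qc; auto. apply Rinv_0_lt_compat; auto.
    - rewrite mu_plus, mu_const, mu_scal. fold A2. rewrite Rinv_inv. rewrite <- Hss.
      right. field. lra. }
  set (t := / (1 + s)).
  assert (Ht : t * (1 + s) = 1) by (unfold t; field; lra).
  assert (Ht0 : 0 < t) by (unfold t; apply Rinv_0_lt_compat; lra).
  assert (Hexp : 0 <= mu q n (fun s0 => (g s0 - t * (u s0 + w s0)) * (g s0 - t * (u s0 + w s0)))).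
  { apply mu_nonneg; auto. intros; apply Rle_0_sqr. }
  assert (Eexp : mu q n (fun s0 => (g s0 - t * (u s0 + w s0)) * (g s0 - t * (u s0 + w s0)))
     = mu q n (fun s0 => g s0 * g s0) - 2 * t * (A1 + A2) + t * t * (A1 + A2 + 2 * X)).
  { replace (fun s0 => (g s0 - t * (u s0 + w s0)) * (g s0 - t * (u s0 + w s0))) with
      (fun s0 => g s0 * g s0 + (-2 * t) * (g s0 * u s0) + (-2 * t) * (g s0 * w s0) + (t * t) * (u s0 * u s0)
         + (t * t) * (w s0 * w s0) + (2 * t * t) * (u s0 * w s0)) by (extensionality s0; ring).
    rewrite !mu_plus, !mu_scal. rewrite Hgu, Hgw, Huu, Hww. fold X. ring. }
  rewrite HN, HD. set (N := mu q n (fun s0 => g s0 * g s0)) in *.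
  set (G := spectral_gap q L) in *.
  assert (HS : A1 + A2 <= (1 + s) * N).
  { assert (N - t * (A1 + A2) >= 0).
    { assert (t * t * (A1 + A2 + 2 * X) <= t * t * ((1 + s) * (A1 + A2))).
      { apply Rmult_le_compat_l. nra. lra. }
      replace (t * t * ((1 + s) * (A1 + A2))) with (t * (t * (1 + s)) * (A1 + A2)) in H by ring.
      rewrite Ht in H. lra. }
    apply (Rmult_le_reg_l t); auto. replace (t * ((1 + s) * N)) with ((t * (1 + s)) * N) by ring. rewrite Ht. lra. }
  assert (G * (2 * N - (A1 + A2)) <= 2 * Dirichlet q n g) by lra.
  assert (G * ((1 - s) * N) <= G * (2 * N - (A1 + A2))) by (apply Rmult_le_compat_l; lra).
  lra.
Qed.

Lemma ceil_bounds L r : (1 <= r)%nat -> (1 <= L)%nat -> (1 <= ceil_div L r <= L)%nat.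
Proof. intros Hr HL. unfold ceil_div. split.
  - apply Nat.div_le_lower_bound; lia.
  - assert ((L + r - 1) / r < S L)%nat by (apply Nat.Div0.div_lt_upper_bound; nia). lia. Qed.

Lemma ell_ge3 r i : (1 <= r)%nat -> (3 <= ell r i)%nat.
Proof. intros Hr. induction i as [|[|j] IH]; try (simpl; lia).
  change (3 <= 2 * ell r (S j) - ceil_div (ell r (S j)) r)%nat.
  pose proof (ceil_bounds (ell r (S j)) r Hr ltac:(lia)). lia. Qed.

Theorem mainTheorem10 (q : R) (r i : nat) :
  0 < q < 1 / 2 -> (2 < r)%nat -> (2 <= i <= r)%nat ->
  Trel q (ell r i) <= 2 / (1 - sqrt (eps q r (i - 1))) * Trel q (ell r (i - 1)).
Proof.
  intros Hq Hr Hi. destruct i as [|[|j]]; try lia.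
  replace (S (S j) - 1)%nat with (S j) by lia.
  assert (Hq1 : 0 < q < 1) by lra.
  pose proof (ell_ge3 r (S j) ltac:(lia)).
  assert (En : ell r (S (S j)) = (2 * ell r (S j) - ceil_div (ell r (S j)) r)%nat) by reflexivity.
  pose proof (ceil_bounds (ell r (S j)) r ltac:(lia) ltac:(lia)).
  unfold eps, Trel.
  set (L := ell r (S j)) in *. set (k := ceil_div L r) in *.
  set (m := (L - k)%nat).
  assert (HL : L = (k + m)%nat) by (unfold m; lia).
  assert (Hn : ell r (S (S j)) = (m + (k + m))%nat) by (rewrite En; unfold m; lia).
  rewrite Hn, HL. clearbody L k m. subst L.
  set (s := sqrt ((1 - q) ^ k)).
  assert (Hs0 : 0 < s) by (apply sqrt_lt_R0; apply pow_lt; lra).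
  assert (Hss : s * s = (1 - q) ^ k) by (apply sqrt_sqrt; apply pow_le; lra).
  assert (Hpk1 : (1 - q) ^ k < 1) by (apply pow_lt_1_compat; lra || lia).
  assert (Hs1 : s < 1) by nra.
  assert (G0 : 0 <= spectral_gap q (k + m)) by (apply gap_nonneg; auto; lia).
  assert (Hc : spectral_gap q (k + m) * (1 - s) / 2 <= spectral_gap q (m + (k + m))).
  { apply gap_ge; auto; try lia. intros h. pose proof (main_ineq q m k h Hq1 ltac:(lia)). fold s in H1.
    unfold Rdiv. nra. }
  destruct G0 as [Gp|Gz].
  - assert (0 < spectral_gap q (k + m) * (1 - s) / 2).
    { unfold Rdiv. apply Rmult_lt_0_compat; [apply Rmult_lt_0_compat; lra|lra]. }
    apply Rle_trans with (/ (spectral_gap q (k + m) * (1 - s) / 2)).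
    + apply Rinv_le_contravar; auto.
    + right. field. split; lra.
  - assert (spectral_gap q (m + (k + m)) <= spectral_gap q (k + m)) by (apply gap_mono; auto; lia).
    assert (0 <= spectral_gap q (m + (k + m))) by (apply gap_nonneg; auto; lia).
    assert (E : spectral_gap q (m + (k + m)) = 0) by lra.
    rewrite E, <- Gz, Rinv_0. lra.
Qed.
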